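(* Let $Y$ be any uniformly monotone Banach lattice. Then the pair $(c_0,Y)$ has the Bishop-Phelps-Bollobás property for positive operators. Moreover, the function $\eta$ in the definition of this property can be chosen depending only on the modulus of uniform monotonicity of $Y$.
   Context: All spaces are real; $c_0$ carries the sup norm and coordinatewise order. For a Banach space $X$, $B_X$ and $S_X$ denote the closed unit ball and unit sphere; $L(X,Y)$ is the space of bounded linear operators with the operator norm. An operator $T$ between Banach lattices is positive if $x\ge0$ implies $Tx\ge 0$. A Banach lattice $E$ is uniformly monotone if for every $\varepsilon>0$ there is $\delta(\varepsilon)>0$ (the modulus of uniform monotonicity) such that whenever $x\in S_E$, $y\in E$, $x,y\ge0$, and $\Vert x+y\Vert\le 1+\delta(\varepsilon)$, then $\Vert y\Vert\le\varepsilon$. A pair $(X,Y)$ of Banach lattices has the Bishop-Phelps-Bollobás property for positive operators if for every $0<\varepsilon<1$ there exists $0<\eta(\varepsilon)<\varepsilon$ such that for every positive $S\in S_{L(X,Y)}$ and every $x_0\in S_X$ with $\Vert S(x_0)\Vert>1-\eta(\varepsilon)$, there exist $u_0\in S_X$ and a positive operator $T\in S_{L(X,Y)}$ with $\Vert T(u_0)\Vert=1$, $\Vert u_0-x_0\Vert<\varepsilon$ and $\Vert T-S\Vert<\varepsilon$. *)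

(* Defs.v *)
From HB Require Import structures.
From mathcomp Require Import all_boot all_order all_algebra.
From mathcomp Require Import all_classical all_reals.
From mathcomp Require Import topology normedtype sequences.
Set Implicit Arguments. Unset Strict Implicit. Unset Printing Implicit Defensive.
Import Order.TTheory GRing.Theory Num.Theory.
Import numFieldNormedType.Exports.
Local Open Scope classical_set_scope.
Local Open Scope ring_scope.

Section BL.
Variable R : realType.

Definition is_lub2 (Y : normedModType R) (le : Y -> Y -> Prop) (x y z : Y) :=
  le x z /\ le y z /\ (forall w, le x w -> le y w -> le z w).

Definition is_banach_lattice (Y : completeNormedModType R) (le : Y -> Y -> Prop) :=
  (forall x, le x x) /\
  (forall x y, le x y -> le y x -> x = y) /\
  (forall x y z, le x y -> le y z -> le x z) /\
  (forall x y z, le x y -> le (x + z) (y + z)) /\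
  (forall (a : R) x y, 0 <= a -> le x y -> le (a *: x) (a *: y)) /\
  (forall x y, exists z, is_lub2 le x y z) /\
  (* lattice norm: |x| <= |y| implies ||x|| <= ||y||, with |x| = x \/ -x *)
  (forall x y ax ay, is_lub2 le x (- x) ax -> is_lub2 le y (- y) ay ->
     le ax ay -> `|x| <= `|y|).

Definition um_modulus (Y : completeNormedModType R) (le : Y -> Y -> Prop)
    (delta : R -> R) :=
  forall eps : R, 0 < eps -> 0 < delta eps /\
    (forall x y : Y, `|x| = 1 -> le 0 x -> le 0 y ->
       `|x + y| <= 1 + delta eps -> `|y| <= eps).

Definition uniformly_monotone (Y : completeNormedModType R) (le : Y -> Y -> Prop) :=
  forall eps : R, 0 < eps -> exists2 delta : R, 0 < delta &
    (forall x y : Y, `|x| = 1 -> le 0 x -> le 0 y ->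
       `|x + y| <= 1 + delta -> `|y| <= eps).

Definition c0 (x : nat -> R) : Prop := x @ \oo --> (0 : R).

Definition c0norm (x : nat -> R) : R := sup [set `|x n| | n in [set: nat]].

(** Operators c_0 -> Y, represented by their action on c_0 elements. *)
Definition c0_linear (Y : normedModType R) (T : (nat -> R) -> Y) :=
  forall (a : R) x y, c0 x -> c0 y ->
    T (fun n => a * x n + y n) = a *: T x + T y.

Definition c0_bounded (Y : normedModType R) (T : (nat -> R) -> Y) :=
  exists M : R, forall x, c0 x -> `|T x| <= M * c0norm x.

Definition opnorm (Y : normedModType R) (T : (nat -> R) -> Y) : R :=
  sup [set `|T x| | x in [set x | c0 x /\ c0norm x <= 1]].

Definition in_op_sphere (Y : normedModType R) (T : (nat -> R) -> Y) :=
  [/\ c0_linear T, c0_bounded T & opnorm T = 1].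

Definition positive_op (Y : normedModType R) (le : Y -> Y -> Prop)
    (T : (nat -> R) -> Y) :=
  forall x, c0 x -> (forall n, 0 <= x n) -> le 0 (T x).

Definition BPBp_pos_with (Y : normedModType R) (le : Y -> Y -> Prop)
    (eta : R -> R) :=
  forall eps : R, 0 < eps < 1 ->
    0 < eta eps < eps /\
    forall (S : (nat -> R) -> Y) (x0 : nat -> R),
      positive_op le S -> in_op_sphere S ->
      c0 x0 -> c0norm x0 = 1 -> `|S x0| > 1 - eta eps ->
      exists (u0 : nat -> R) (T : (nat -> R) -> Y),
        [/\ c0 u0 /\ c0norm u0 = 1, positive_op le T /\ in_op_sphere T,
            `|T u0| = 1,
            c0norm (fun n => u0 n - x0 n) < eps &
            opnorm (fun x => T x - S x) < eps].

Definition BPBp_pos (Y : normedModType R) (le : Y -> Y -> Prop) :=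
  exists eta : R -> R, BPBp_pos_with le eta.

End BL.

(* Main.v *)
Require Import Defs.
From HB Require Import structures.
From mathcomp Require Import all_boot all_order all_algebra.
From mathcomp Require Import all_classical all_reals.
From mathcomp Require Import topology normedtype sequences.
Import Order.TTheory GRing.Theory Num.Theory.
Import numFieldNormedType.Exports.
Local Open Scope ring_scope.
From mathcomp Require Import lra.
Set Implicit Arguments. Unset Strict Implicit.

Ltac zflat := rewrite ?opprD ?opprK ?opprB ?opprD ?opprK ?addrA.
Ltac zlast x := repeat rewrite (addrAC _ x).
Ltac zcancel1 :=
  match goal with
  | |- context [ - ?x ] =>
      zlast x; zlast (- x);
      first [ rewrite subrK | rewrite addrK | rewrite addNr | rewrite subrr ]
  end.
Ltac zsolve :=
  apply/eqP; rewrite -subr_eq0; apply/eqP; zflat;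
  repeat (zcancel1; rewrite ?addr0 ?add0r ?subr0 ?sub0r ?oppr0); rewrite ?oppr0 ?addr0; try done.
Section Lat.
Variable R : realType.
Variable Y : completeNormedModType R.
Variable le : Y -> Y -> Prop.
Hypothesis HBL : is_banach_lattice le.

Lemma lle_refl x : le x x.
Proof. by case: HBL. Qed.
Lemma lle_anti x y : le x y -> le y x -> x = y.
Proof. by case: HBL => _ [H _]; apply: H. Qed.
Lemma lle_trans x y z : le x y -> le y z -> le x z.
Proof. by case: HBL => _ [_ [H _]]; apply: H. Qed.
Lemma le_addr x y z : le x y -> le (x + z) (y + z).
Proof. by case: HBL => _ [_ [_ [H _]]]; apply: H. Qed.
Lemma le_scale (a : R) x y : 0 <= a -> le x y -> le (a *: x) (a *: y).
Proof. by case: HBL => _ [_ [_ [_ [H _]]]]; apply: H. Qed.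
Lemma lub_ex x y : exists z, is_lub2 le x y z.
Proof. by case: HBL => _ [_ [_ [_ [_ [H _]]]]]; apply: H. Qed.
Lemma lat_norm x y ax ay : is_lub2 le x (- x) ax -> is_lub2 le y (- y) ay ->
     le ax ay -> `|x| <= `|y|.
Proof. by case: HBL => _ [_ [_ [_ [_ [_ H]]]]]; apply: H. Qed.

Lemma lleP x y : le x y <-> le 0 (y - x).
Proof.
split=> H.
  by have := le_addr (- x) H; rewrite subrr.
by have := le_addr x H; rewrite add0r subrK.
Qed.

Lemma le_eqP x y z : le 0 z -> y - x = z -> le x y.
Proof. by move=> Hz Hyx; apply/lleP; rewrite Hyx. Qed.

Lemma pos_add a b : le 0 a -> le 0 b -> le 0 (a + b).
Proof.
move=> Ha Hb; apply: lle_trans Hb _.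
by have := le_addr b Ha; rewrite add0r.
Qed.

Lemma pos_scale (k : R) a : 0 <= k -> le 0 a -> le 0 (k *: a).
Proof. by move=> Hk Ha; have := le_scale Hk Ha; rewrite scaler0. Qed.

Lemma le_add2 x1 x2 y1 y2 : le x1 x2 -> le y1 y2 -> le (x1 + y1) (x2 + y2).
Proof.
move=> /lleP H1 /lleP H2; apply/lleP.
have -> : x2 + y2 - (x1 + y1) = (x2 - x1) + (y2 - y1).
  by rewrite opprD addrACA.
exact: pos_add.
Qed.

Lemma pos_sum N (f : nat -> Y) : (forall n, le 0 (f n)) ->
  le 0 (\sum_(0 <= n < N) f n).
Proof.
move=> H; apply: (big_ind (fun v => le 0 v)) => //.
  exact: lle_refl.
by move=> a b; apply: pos_add.
Qed.

Lemma le_sum N (f g : nat -> Y) : (forall n, le (f n) (g n)) ->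
  le (\sum_(0 <= n < N) f n) (\sum_(0 <= n < N) g n).
Proof.
move=> H; apply: (big_ind2 (fun u v => le u v)) => //.
  exact: lle_refl.
by move=> ? ? ? ?; apply: le_add2.
Qed.

Lemma pos_half a : le 0 (a + a) -> le 0 a.
Proof.
move=> H.
have H2 : (0:R) <= 2^-1 by rewrite invr_ge0.
have := pos_scale H2 H.
have -> : a + a = 2 *: a by rewrite scaler_nat mulr2n.
by rewrite scalerA mulVf ?scale1r // pnatr_eq0.
Qed.

Lemma neg_le x y : le (- y) x -> le (- x) y.
Proof. by move=> /lleP H; apply/lleP; rewrite opprK addrC -[y]opprK. Qed.

Lemma pos_of_sym x y : le (- y) x -> le x y -> le 0 y.
Proof.
move=> H1 H2; apply: pos_half.
have := lle_trans H1 H2 => /lleP; by rewrite opprK.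
Qed.

Lemma lub_self j : le 0 j -> is_lub2 le j (- j) j.
Proof.
move=> Hj; split; first exact: lle_refl.
split; last by [].
by apply/lleP; rewrite opprK; apply: pos_add.
Qed.

Lemma normL x y : le (- y) x -> le x y -> `|x| <= `|y|.
Proof.
move=> H1 H2; have [ax Hax] := lub_ex x (- x).
apply: (lat_norm Hax (lub_self (pos_of_sym H1 H2))).
case: Hax => _ [_ Hl]; apply: Hl => //.
exact: neg_le.
Qed.

Lemma pos_normle x y : le 0 x -> le x y -> `|x| <= `|y|.
Proof.
move=> Hx Hxy; apply: normL => //.
apply: (lle_trans _ Hx); apply/lleP; rewrite opprK add0r; exact: (lle_trans Hx Hxy).
Qed.

Lemma norm_lub x j : is_lub2 le x (- x) j -> `|x| = `|j|.
Proof.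
move=> Hj; have Hj0 : le 0 j.
  by case: Hj => H1 [H2 _]; apply: (pos_of_sym (neg_le H2)).
apply/eqP; rewrite eq_le; apply/andP; split.
  exact: (lat_norm Hj (lub_self Hj0) (lle_refl j)).
exact: (lat_norm (lub_self Hj0) Hj (lle_refl j)).
Qed.

Lemma meet_props p q l : le 0 p -> le 0 q -> is_lub2 le p q l ->
  [/\ le 0 (p + q - l), le (p + q - l) p & le (p + q - l) q].
Proof.
move=> Hp Hq [Hpl [Hql Hlub]]; split.
- apply/(lleP l (p + q)); apply: Hlub.
  + by apply/lleP; have -> : p + q - p = q by zsolve.
  + by apply/lleP; have -> : p + q - q = p by zsolve.
- apply/lleP; have -> : p - (p + q - l) = l - q by zsolve.
  by move/lleP: Hql.
- apply/lleP; have -> : q - (p + q - l) = l - p by zsolve.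
  by move/lleP: Hpl.
Qed.

Lemma half_add (v : Y) : 2^-1 *: v + 2^-1 *: v = v.
Proof.
by rewrite -scalerDl -[X in X + _]mul1r -[X in _ + X]mul1r -splitr scale1r.
Qed.

Lemma le_double a b : le (a + a) (b + b) -> le a b.
Proof.
move=> /lleP H; apply/lleP; apply: pos_half.
by have <- : b + b - (a + a) = b - a + (b - a) by zsolve.
Qed.

Lemma absdiff_lub p q l : is_lub2 le p q l ->
  is_lub2 le (p - q) (- (p - q)) (l + l - p - q).
Proof.
move=> [Hpl [Hql Hlub]]; split; [|split].
- apply/lleP; have -> : l + l - p - q - (p - q) = (l - p) + (l - p) by zsolve.
  by move/lleP: Hpl => Hpl; apply: pos_add.
- apply/lleP; have -> : l + l - p - q - - (p - q) = (l - q) + (l - q) by zsolve.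
  by move/lleP: Hql => Hql; apply: pos_add.
- move=> w /lleP H1 /lleP H2; apply/lleP.
  set h := 2^-1 *: (w + p + q).
  have Hl : le l h.
    apply: Hlub; apply: le_double; rewrite half_add; apply/lleP.
    + by have -> : w + p + q - (p + p) = w - (p - q) by zsolve.
    + by have -> : w + p + q - (q + q) = w - - (p - q) by zsolve.
  have := le_add2 Hl Hl; rewrite half_add => /lleP.
  by have -> : w + p + q - (l + l) = w - (l + l - p - q) by zsolve.
Qed.

Lemma riesz (y : nat -> Y) (P : pred nat) : (forall n, le 0 (y n)) ->
  forall N m, le 0 m -> le m (\sum_(0 <= n < N) (if P n then y n else 0)) ->
  exists w : nat -> Y, (forall n, le 0 (w n) /\ le (w n) (y n)) /\
     \sum_(0 <= n < N) (if P n then w n else 0) = m.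
Proof.
move=> Hy; elim=> [|N IH] m Hm.
  rewrite big_geq // => Hm0; exists (fun=> 0); split.
    by move=> n; split; [exact: lle_refl| exact: Hy].
  by rewrite big_geq //; apply: lle_anti.
have Hs : le 0 (\sum_(0 <= n < N) (if P n then y n else 0)).
  by apply: pos_sum => n; case: (P n) => //; exact: lle_refl.
rewrite big_nat_recr //=; set s := \sum_(0 <= n < N) _ => HmS.
case HP: (P N); rewrite HP in HmS; last first.
  rewrite addr0 in HmS; have [w [Hw1 Hw2]] := IH m Hm HmS.
  by exists w; split => //; rewrite big_nat_recr //= HP addr0.
have [l Hl] := lub_ex m (y N).
have [HwN1 HwN2 HwN3] := meet_props Hm (Hy N) Hl.
case: Hl => [Hml [HyNl Hlub]].
have Hm'0 : le 0 (l - y N) by move/lleP: HyNl.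
have Hls : le l (s + y N).
  apply: Hlub => //; apply/lleP; by have -> : s + y N - y N = s by zsolve.
have Hm's : le (l - y N) s.
  apply/lleP; move/lleP: Hls.
  by have -> : s + y N - l = s - (l - y N) by zsolve.
have [w [Hw1 Hw2]] := IH _ Hm'0 Hm's.
exists (fun n => if n == N then m + y N - l else w n); split.
  by move=> n; case: eqP => [->|_]; [split | exact: Hw1].
rewrite big_nat_recr //= eqxx HP.
rewrite (@eq_big_nat _ _ _ 0 N _ (fun n => if P n then w n else 0)); last first.
  by move=> i /andP [_ Hi]; rewrite (ltn_eqF Hi).
rewrite Hw2; zsolve.
Qed.

Lemma um_scaled (delta : R -> R) (e : R) (X Z : Y) : um_modulus le delta -> 0 < e ->
  le 0 X -> le 0 Z -> 0 < `|X| -> `|X + Z| <= `|X| * (1 + delta e) ->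
  `|Z| <= `|X| * e.
Proof.
move=> Hum He HX HZ Hs Hn.
have Hsi : 0 <= `|X|^-1 by rewrite invr_ge0 ltW.
have := (Hum e He).2 (`|X|^-1 *: X) (`|X|^-1 *: Z).
rewrite !normrZ ger0_norm // mulVf ?gt_eqF //.
rewrite -scalerDr normrZ ger0_norm //.
move=> /(_ erefl (pos_scale Hsi HX) (pos_scale Hsi HZ)).
move=> H.
have H1 : `|X|^-1 * `|X + Z| <= 1 + delta e.
  by rewrite mulrC ler_pdivrMr // mulrC.
by have := H H1; rewrite mulrC ler_pdivrMr // mulrC.
Qed.
End Lat.

Section C0.
Variable R : realType.
Local Open Scope classical_set_scope.

Lemma c0P (x : nat -> R) : c0 x <->
  forall e : R, 0 < e -> exists N, forall n, (N <= n)%N -> `|x n| < e.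
Proof.
rewrite /c0; split.
  move=> /cvgr0Pnorm_lt H e He; have [N _ HN] := H e He.
  by exists N => n Hn; apply: HN.
move=> H; apply/cvgr0Pnorm_lt => e He; have [N HN] := H e He.
by exists N => // n Hn; apply: HN.
Qed.

Lemma c0_dom (x y : nat -> R) : c0 y -> (forall n, `|x n| <= `|y n|) -> c0 x.
Proof.
move=> /c0P Hy Hd; apply/c0P => e He; have [N HN] := Hy e He.
by exists N => n Hn; apply: le_lt_trans (HN n Hn).
Qed.

Lemma c0_ev (x y : nat -> R) N : c0 y -> (forall n, (N <= n)%N -> x n = y n) -> c0 x.
Proof.
move=> /c0P Hy He; apply/c0P => e Pe; have [M HM] := Hy e Pe.
exists (maxn N M) => n Hn; rewrite He; first apply: HM.
  exact: leq_trans (leq_maxr _ _) Hn.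
exact: leq_trans (leq_maxl _ _) Hn.
Qed.

Lemma c0_0 : c0 (fun _ : nat => (0 : R)).
Proof. by apply/c0P => e He; exists 0%N => n _; rewrite normr0. Qed.

Lemma c0_fin (x : nat -> R) N : (forall n, (N <= n)%N -> x n = 0) -> c0 x.
Proof. by move=> H; apply: (c0_ev c0_0 H). Qed.

Lemma c0_lin (a : R) (x y : nat -> R) : c0 x -> c0 y -> c0 (fun n => a * x n + y n).
Proof.
move=> /c0P Hx /c0P Hy; apply/c0P => e He.
have Ha : 0 < `|a| + 1 by rewrite ltr_wpDl.
have He2 : 0 < e / 2 by rewrite divr_gt0.
have He3 : 0 < e / 2 / (`|a| + 1) by rewrite divr_gt0.
have [N1 HN1] := Hx _ He3; have [N2 HN2] := Hy _ He2.
exists (maxn N1 N2) => n Hn.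
have H1 := HN1 n (leq_trans (leq_maxl _ _) Hn).
have H2 := HN2 n (leq_trans (leq_maxr _ _) Hn).
apply: (le_lt_trans (ler_normD _ _)); rewrite normrM.
have H3 : `|a| * `|x n| <= e / 2.
  have H4 : `|x n| * (`|a| + 1) <= e / 2.
    by rewrite -ler_pdivlMr //; apply: ltW.
  apply: le_trans H4; rewrite mulrC; apply: ler_wpM2l => //; lra.
lra.
Qed.

Lemma c0_scale (a : R) (x : nat -> R) : c0 x -> c0 (fun n => a * x n).
Proof.
move=> Hx; have := c0_lin a Hx c0_0.
by have -> : (fun n => a * x n + 0) = (fun n => a * x n) by apply: funext => n; rewrite addr0.
Qed.

Lemma c0_add (x y : nat -> R) : c0 x -> c0 y -> c0 (fun n => x n + y n).
Proof.
move=> Hx Hy; have := c0_lin 1 Hx Hy.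
by have -> : (fun n => 1 * x n + y n) = (fun n => x n + y n) by apply: funext => n; rewrite mul1r.
Qed.

Lemma c0_sub (x y : nat -> R) : c0 x -> c0 y -> c0 (fun n => x n - y n).
Proof.
move=> Hx Hy; have := c0_lin (-1) Hy Hx.
by have -> : (fun n => -1 * y n + x n) = (fun n => x n - y n) by apply: funext => n; rewrite mulN1r addrC.
Qed.

Lemma c0_abs (x : nat -> R) : c0 x -> c0 (fun n => `|x n|).
Proof. by move=> H; apply: (c0_dom H) => n; rewrite normr_id. Qed.

Lemma c0_bnd (x : nat -> R) : c0 x -> exists M, forall n, `|x n| <= M.
Proof.
move=> /c0P H; have [N HN] := H 1 ltr01.
exists (1 + \sum_(0 <= i < N) `|x i|) => n.
case: (leqP N n) => Hn.
  apply: le_trans (ltW (HN n Hn)) _; rewrite lerDl sumr_ge0 //.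
have : `|x n| <= \sum_(0 <= i < N) `|x i|.
  rewrite (@big_cat_nat _ _ _ n 0 N _ _ (leq0n _) (ltnW Hn)) /=.
  by rewrite [\sum_(n <= i < N) _]big_ltn //= addrCA lerDl addr_ge0 // sumr_ge0.
move=> Hl; apply: le_trans Hl _; rewrite lerDr //.
Qed.

Lemma c0norm_set0 (x : nat -> R) : [set `|x n| | n in [set: nat]] !=set0.
Proof. by exists `|x 0%N|; exists 0%N. Qed.

Lemma c0norm_ge (x : nat -> R) n : c0 x -> `|x n| <= c0norm x.
Proof.
move=> Hx; have [M HM] := c0_bnd Hx.
apply: sup_upper_bound; last by exists n.
split; first exact: c0norm_set0.
by exists M => _ [k _ <-].
Qed.

Lemma c0norm_le (x : nat -> R) b : (forall n, `|x n| <= b) -> c0norm x <= b.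
Proof. by move=> H; apply: ge_sup; [exact: c0norm_set0 | move=> _ [k _ <-]]. Qed.

Lemma c0norm_ge0 (x : nat -> R) : c0 x -> 0 <= c0norm x.
Proof. by move=> Hx; apply: le_trans (c0norm_ge 0 Hx). Qed.

End C0.

Section Ops.
Variable R : realType.
Variable Y : normedModType R.
Local Open Scope classical_set_scope.
Implicit Types (T : (nat -> R) -> Y) (x : nat -> R).

Lemma lin0 T : c0_linear T -> T (fun _ => 0) = 0.
Proof.
move=> HT; have := HT (-1) _ _ (@c0_0 R) (@c0_0 R).
have -> : (fun n : nat => -1 * (0:R) + 0) = (fun=> 0) by apply: funext => n; rewrite mulr0 addr0.
by move=> H; rewrite {1}H scaleN1r addNr.
Qed.

Lemma linZ T a x : c0_linear T -> c0 x -> T (fun n => a * x n) = a *: T x.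
Proof.
move=> HT Hx; have := HT a _ _ Hx (@c0_0 R).
have -> : (fun n : nat => a * x n + 0) = (fun n => a * x n) by apply: funext => n; rewrite addr0.
by rewrite lin0 // addr0.
Qed.

Lemma linD T x y : c0_linear T -> c0 x -> c0 y -> T (fun n => x n + y n) = T x + T y.
Proof.
move=> HT Hx Hy; have := HT 1 _ _ Hx Hy.
have -> : (fun n : nat => 1 * x n + y n) = (fun n => x n + y n) by apply: funext => n; rewrite mul1r.
by rewrite scale1r.
Qed.

Lemma linB T x y : c0_linear T -> c0 x -> c0 y -> T (fun n => x n - y n) = T x - T y.
Proof.
move=> HT Hx Hy; have := HT (-1) _ _ Hy Hx.
have -> : (fun n : nat => -1 * y n + x n) = (fun n => x n - y n).
  by apply: funext => n; rewrite mulN1r addrC.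
by rewrite scaleN1r addrC.
Qed.

Lemma opset0 T : [set `|T x| | x in [set x | c0 x /\ c0norm x <= 1]] !=set0.
Proof.
exists `|T (fun=> 0)|; exists (fun=> 0) => //; split; first exact: c0_0.
by apply: c0norm_le => n; rewrite normr0.
Qed.

Lemma op_le T x : c0_bounded T -> c0 x -> c0norm x <= 1 -> `|T x| <= opnorm T.
Proof.
move=> [M HM] Hx Hn; apply: sup_upper_bound; last by exists x.
split; first exact: opset0.
exists `|M| => _ [z [Hz Hzn] <-]; apply: le_trans (HM z Hz) _.
have H0 := c0norm_ge0 Hz.
apply: (le_trans (y := `|M| * c0norm z)).
  by apply: ler_wpM2r => //; apply: ler_norm.
by rewrite -[X in _ <= X]mulr1; apply: ler_wpM2l.
Qed.

Lemma opnorm_le T b : (forall x, c0 x -> c0norm x <= 1 -> `|T x| <= b) -> opnorm T <= b.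
Proof. by move=> H; apply: ge_sup; [exact: opset0 | move=> _ [z [Hz Hzn] <-]; apply: H]. Qed.

Lemma op_bound T x : in_op_sphere T -> c0 x -> `|T x| <= c0norm x.
Proof.
case=> HL HB HN Hx.
have H0 := c0norm_ge0 Hx.
case: (eqVneq (c0norm x) 0) => Hz.
  have -> : x = fun=> 0.
    apply: funext => n; apply/eqP; rewrite -normr_eq0 eq_le normr_ge0 andbT.
    by apply: le_trans (c0norm_ge n Hx) _; rewrite Hz.
  by rewrite lin0 // normr0; apply: c0norm_ge0; exact: c0_0.
have Hp : 0 < c0norm x by rewrite lt_def Hz H0.
set s := c0norm x.
have Hx' : c0 (fun n => s^-1 * x n) by apply: c0_scale.
have Hn' : c0norm (fun n => s^-1 * x n) <= 1.
  apply: c0norm_le => n; rewrite normrM ger0_norm ?invr_ge0 // mulrC ler_pdivrMr // mul1r.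
  exact: c0norm_ge.
have := op_le HB Hx' Hn'; rewrite HN linZ // normrZ ger0_norm ?invr_ge0 //.
by rewrite mulrC ler_pdivrMr // mul1r.
Qed.

End Ops.

Definition ee {R : realType} (n : nat) : nat -> R := fun k => if k == n then 1 else 0.

Lemma c0_ee (R : realType) n : c0 (@ee R n).
Proof. by apply: (c0_fin (N := n.+1)) => k Hk; rewrite /ee gtn_eqF. Qed.

Lemma linsum (R : realType) (Y : normedModType R) (T : (nat -> R) -> Y)
  (P : pred nat) (x : nat -> R) : c0_linear T -> forall N,
  T (fun k => if (k < N)%N && P k then x k else 0) =
  \sum_(0 <= n < N) (if P n then x n *: T (ee n) else 0).
Proof.
move=> HT; elim=> [|N IH].
  rewrite big_geq //.
  have -> : (fun k : nat => if (k < 0)%N && P k then x k else 0) = (fun=> 0) by [].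
  exact: lin0.
have Hf : (fun k : nat => if (k < N.+1)%N && P k then x k else 0) =
   (fun k => (if P N then x N else 0) * ee N k + (if (k < N)%N && P k then x k else 0)).
  apply: funext => k; rewrite /ee ltnS leq_eqVlt.
  case: (eqVneq k N) => [->|Hk] /=.
    by rewrite ltnn mulr1 addr0; case: (P N).
  by rewrite mulr0 add0r.
have Hc : c0 (fun k => if (k < N)%N && P k then x k else 0).
  by apply: (c0_fin (N := N)) => k Hk; rewrite ltnNge Hk.
rewrite Hf HT //; last exact: c0_ee.
rewrite IH big_nat_recr //= addrC; congr (_ + _).
by case: (P N); rewrite ?scale0r.
Qed.

Section Pos.
Variable R : realType.
Variable Y : completeNormedModType R.
Variable le : Y -> Y -> Prop.
Hypothesis HBL : is_banach_lattice le.

Lemma Lpos (S : (nat -> R) -> Y) (x g : nat -> R) : positive_op le S -> c0_linear S ->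
  c0 x -> c0 g -> (forall n, `|x n| <= g n) -> `|S x| <= `|S g|.
Proof.
move=> HP HL Hx Hg Hd.
have H1 : le 0 (S g - S x).
  rewrite -linB //; apply: HP; first by apply: c0_sub.
  move=> n; rewrite subr_ge0; apply: le_trans (Hd n); exact: ler_norm.
have H2 : le 0 (S g + S x).
  rewrite -linD //; apply: HP; first by apply: c0_add.
  move=> n; rewrite -lerBlDr sub0r; apply: le_trans (Hd n); rewrite -normrN; exact: ler_norm.
apply: (normL HBL).
  by apply/(lleP HBL); rewrite opprK addrC.
by apply/(lleP HBL).
Qed.
End Pos.

Section Sums.
Variable V : zmodType.
Implicit Types (f g : nat -> V) (P c : pred nat).

Lemma sum_ifB N P f g : \sum_(0 <= n < N) (if P n then f n - g n else 0) =
  \sum_(0 <= n < N) (if P n then f n else 0) - \sum_(0 <= n < N) (if P n then g n else 0).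
Proof. by rewrite -sumrB; apply: eq_bigr => n _; case: (P n); rewrite ?subr0. Qed.

Lemma sum_ifsplit N P c f : \sum_(0 <= n < N) (if P n then f n else 0) =
  \sum_(0 <= n < N) (if P n && c n then f n else 0) +
  \sum_(0 <= n < N) (if P n && ~~ c n then f n else 0).
Proof.
by rewrite -big_split; apply: eq_bigr => n _; case: (P n); case: (c n); rewrite /= ?addr0 ?add0r.
Qed.

Lemma sum_ifeq N P f g : (forall n, P n -> f n = g n) ->
  \sum_(0 <= n < N) (if P n then f n else 0) = \sum_(0 <= n < N) (if P n then g n else 0).
Proof. by move=> H; apply: eq_bigr => n _; case E: (P n); rewrite ?H. Qed.
End Sums.

Definition kk (R : realType) (delta : R -> R) (eps : R) : R :=
  Num.min (eps / 24) (Num.min (delta (eps / 8)) 1 / 12).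
Definition eta_of (R : realType) (delta : R -> R) (eps : R) : R :=
  Num.min (kk delta eps) (delta (kk delta eps ^+ 2) / (1 + delta (kk delta eps ^+ 2))) / 2.

Lemma main_thm (R : realType) (Y : completeNormedModType R) (le : Y -> Y -> Prop)
  (HBL : is_banach_lattice le) (delta : R -> R) (Hum : um_modulus le delta) :
  BPBp_pos_with le (eta_of delta).
Proof.
move=> eps /andP [He0 He1].
set k := kk delta eps.
set D := Num.min (delta (eps / 8)) 1.
have He8 : 0 < eps / 8 by rewrite divr_gt0.
have Hd8 : 0 < delta (eps / 8) := (Hum _ He8).1.
have HD0 : 0 < D by rewrite lt_min Hd8 ltr01.
have HD1 : D <= 1 by rewrite ge_min lexx orbT.
have HDd : D <= delta (eps / 8) by rewrite ge_min lexx.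
have Hk0 : 0 < k by rewrite /k /kk lt_min divr_gt0 // divr_gt0.
have Hk1 : k <= eps / 24 by rewrite /k /kk ge_min lexx.
have Hk2 : k <= D / 12 by rewrite /k /kk ge_min lexx orbT.
set d1 := delta (k ^+ 2).
have Hd1 : 0 < d1 := (Hum _ (exprn_gt0 2 Hk0)).1.
set eta := eta_of delta eps.
have Hq0 : 0 < d1 / (1 + d1) by rewrite divr_gt0 // addr_gt0.
have Het0 : 0 < eta by rewrite /eta /eta_of -/k -/d1 divr_gt0 // lt_min Hk0.
have Het1 : eta <= k / 2.
  by rewrite /eta /eta_of -/k -/d1 ler_pM2r ?invr_gt0 // ge_min lexx.
have Het2 : eta * (1 + d1) <= d1.
  have : eta <= d1 / (1 + d1) / 2.
    by rewrite /eta /eta_of -/k -/d1 ler_pM2r ?invr_gt0 // ge_min lexx orbT.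
  move=> H; have H2 : d1 / (1 + d1) / 2 <= d1 / (1 + d1).
    rewrite ler_pdivrMr // ler_peMr //; [exact: ltW | lra].
  by rewrite -ler_pdivlMr ?addr_gt0 //; apply: le_trans H H2.
split; first by apply/andP; split => //; lra.
move=> S x0 HSp HS Hx0 Hn0 HSx0.
have HS' := HS; case: HS' => HSL HSB HSN.
have HSle x : c0 x -> `|S x| <= c0norm x by move=> Hx; apply: op_bound.
have H1k : 0 < 1 - k by clear - Hk1 He1; lra.
have [N HN] := (c0P x0).1 Hx0 (1 - k) H1k.
have Hx0le n : `|x0 n| <= 1 by rewrite -Hn0; apply: c0norm_ge.
pose P : pred nat := fun n => 1 - k < `|x0 n|.
pose a n := (n < N)%N && P n.
have HB n : ~~ a n -> `|x0 n| <= 1 - k.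
  rewrite /a negb_and => /orP [|]; first by rewrite -leqNgt => /HN /ltW.
  by rewrite /P -leNgt.
pose cc : pred nat := fun n => 0 <= x0 n.
pose Pp : pred nat := fun n => P n && cc n.
pose Pm : pred nat := fun n => P n && ~~ cc n.
pose u0 n := if a n then (if cc n then 1 else -1) else x0 n.
pose yv n := S (ee n).
have Hyv n : le 0 (yv n).
  by apply: HSp; [exact: c0_ee | move=> i; rewrite /ee; case: (i == n)].
pose p := \sum_(0 <= n < N) (if Pp n then yv n else 0).
pose q := \sum_(0 <= n < N) (if Pm n then yv n else 0).
have Hp : le 0 p by apply: (pos_sum HBL) => n; case: (Pp n) => //; exact: (lle_refl HBL).
have Hq : le 0 q by apply: (pos_sum HBL) => n; case: (Pm n) => //; exact: (lle_refl HBL).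
have [l Hl] := lub_ex HBL p q.
pose m := p + q - l.
have [Hm0 Hmp Hmq] := meet_props HBL Hp Hq Hl.
pose j := l + l - p - q.
have Hj : is_lub2 le (p - q) (- (p - q)) j := absdiff_lub HBL Hl.
have Hcj : `|p - q| = `|j| := norm_lub HBL Hj.
have Hj0 : le 0 j.
  by case: Hj => H1 [H2 _]; apply: (pos_of_sym HBL (neg_le HBL H2) H1).
have Hjm : j + (m + m) = p + q by rewrite /j /m; zsolve.
have [wp [Hwp1 Hwp2]] := @riesz _ _ _ HBL yv Pp Hyv N m Hm0 Hmp.
have [wm [Hwm1 Hwm2]] := @riesz _ _ _ HBL yv Pm Hyv N m Hm0 Hmq.
pose wv n := if cc n then wp n else wm n.
pose v n := if P n then yv n - wv n else 0.
have Hwv n : le 0 (wv n) /\ le (wv n) (yv n) by rewrite /wv; case: (cc n).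
have Hv n : le 0 (v n).
  rewrite /v; case: (P n); last exact: (lle_refl HBL).
  by case: (Hwv n) => _ /(lleP HBL).
pose Psi (x : nat -> R) := \sum_(0 <= n < N) (if P n then x n *: wv n else 0).
have HlinA x : S (fun k => if a k then x k else 0) =
    \sum_(0 <= n < N) (if P n then x n *: yv n else 0) := linsum P x HSL N.
have Psum x : \sum_(0 <= n < N) x n *: v n = S (fun k => if a k then x k else 0) - Psi x.
  rewrite HlinA -sumrB; apply: eq_bigr => n _; rewrite /v.
  by case: (P n); rewrite ?scalerBr ?scaler0 ?subr0.
have Hsplit (F : nat -> Y) : \sum_(0 <= n < N) (if P n then 1 *: F n else 0) =
    \sum_(0 <= n < N) (if Pp n then F n else 0) + \sum_(0 <= n < N) (if Pm n then F n else 0).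
  by rewrite (sum_ifsplit _ _ cc); congr (_ + _); apply: sum_ifeq => n _; rewrite scale1r.
have Hsign (F : nat -> Y) : \sum_(0 <= n < N) (if P n then u0 n *: F n else 0) =
    \sum_(0 <= n < N) (if Pp n then F n else 0) - \sum_(0 <= n < N) (if Pm n then F n else 0).
  rewrite (sum_ifsplit _ _ cc) -sumrN; congr (_ + _); apply: eq_big_nat => n /andP [_ Hn];
  rewrite /Pp /Pm /u0 /a Hn /=; case: (P n) => //=; case: (cc n) => //=.
  all: try by rewrite ?scale1r ?scaleN1r ?oppr0.
have Hwpm : \sum_(0 <= n < N) (if Pp n then wv n else 0) = m.
  by rewrite -Hwp2; apply: sum_ifeq => n /andP [_ Hc]; rewrite /wv Hc.
have Hwmm : \sum_(0 <= n < N) (if Pm n then wv n else 0) = m.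
  by rewrite -Hwm2; apply: sum_ifeq => n /andP [_ Hc]; rewrite /wv (negbTE Hc).
have HS1A : S (fun k => if a k then 1 else 0) = p + q by rewrite HlinA Hsplit.
have HPsi1 : Psi (fun=> 1) = m + m by rewrite /Psi Hsplit Hwpm Hwmm.
have HSuA : S (fun k => if a k then u0 k else 0) = p - q by rewrite HlinA Hsign.
have HPsiu : Psi u0 = 0 by rewrite /Psi Hsign Hwpm Hwmm subrr.
have Hsumv : \sum_(0 <= n < N) v n = j.
  have := Psum (fun=> 1); under eq_bigr do rewrite scale1r.
  by move=> ->; rewrite HS1A HPsi1 -Hjm addrK.
have Hsumu : \sum_(0 <= n < N) u0 n *: v n = p - q by rewrite Psum HSuA HPsiu subr0.
pose ax := fun n => `|x0 n|.
have Hax : c0 ax := c0_abs Hx0.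
have HX0 : le 0 (S ax) by apply: HSp => // n; exact: normr_ge0.
have HXlow : 1 - eta < `|S ax|.
  apply: lt_le_trans HSx0 _; apply: (Lpos HBL) => // n; exact: lexx.
have HXup : `|S ax| <= 1.
  apply: le_trans (HSle _ Hax) _; apply: c0norm_le => n; rewrite /ax normr_id; exact: Hx0le.
have Hnum1 : 1 <= `|S ax| * (1 + d1).
  have : (1 - eta) * (1 + d1) <= `|S ax| * (1 + d1).
    by rewrite ler_pM2r ?addr_gt0 //; apply: ltW.
  move=> H; clear - H Het2; nra.
have Hstep1 h : c0 h -> (forall n, 0 <= h n <= 1) -> (forall n, a n -> h n = 0) -> `|S h| <= k.
  move=> Hh Hh01 Hha.
  have Hkh : c0 (fun n => k * h n) := c0_scale k Hh.
  have HZ : S (fun n => k * h n) = k *: S h := linZ k HSL Hh.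
  have HZ0 : le 0 (S (fun n => k * h n)).
    by apply: HSp => // n; apply: mulr_ge0; [exact: ltW | by case/andP: (Hh01 n)].
  have HXZ : `|S ax + S (fun n => k * h n)| <= 1.
    rewrite -linD //; apply: le_trans (HSle _ (c0_add Hax Hkh)) _.
    apply: c0norm_le => n; rewrite /ax.
    have [Hh0 Hh1] := andP (Hh01 n).
    have Hkh1 : k * h n <= k by rewrite -[X in _ <= X]mulr1 ler_wpM2l // ltW.
    rewrite ger0_norm; last by rewrite addr_ge0 // mulr_ge0 // ltW.
    case: (boolP (a n)) => Han.
      by rewrite Hha // mulr0 addr0.
    by have H5 := HB n Han; clear - H5 Hkh1; lra.
  have HXp : 0 < `|S ax| by clear - HXlow Het1 Hk1 He1 Het0; lra.
  have := um_scaled HBL Hum (exprn_gt0 2 Hk0) HX0 HZ0 HXp (le_trans HXZ Hnum1).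
  rewrite HZ normrZ gtr0_norm // => Hle.
  have : k * `|S h| <= k * k.
    apply: le_trans Hle _; rewrite expr2 -[X in _ <= X]mul1r ler_wpM2r //.
    by rewrite mulr_ge0 // ltW.
  by rewrite ler_pM2l.
have Hstep1' x : c0 x -> c0norm x <= 1 -> `|S (fun n => if a n then 0 else x n)| <= k.
  move=> Hx Hxn.
  pose g := fun n => if a n then 0 else `|x n|.
  have Hg : c0 g.
    by apply: (c0_dom Hx) => n; rewrite /g; case: (a n); rewrite ?normr0 ?normr_id.
  have HxB : c0 (fun n => if a n then 0 else x n).
    by apply: (c0_dom Hx) => n; case: (a n); rewrite ?normr0.
  apply: le_trans (Lpos HBL HSp HSL HxB Hg _) _.
    by move=> n; rewrite /g; case: (a n); rewrite ?normr0.
  apply: Hstep1 => //.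
    move=> n; rewrite /g; case: (a n); rewrite ?lexx ?ler01 //=.
    by rewrite normr_ge0 /=; apply: le_trans (c0norm_ge n Hx) Hxn.
  by move=> n Han; rewrite /g Han.
have Hdiff n : `|u0 n - x0 n| <= k.
  rewrite /u0; case: (boolP (a n)) => Han; last by rewrite subrr normr0 ltW.
  have HPn : 1 - k < `|x0 n| by case/andP: Han.
  have H1 := Hx0le n.
  rewrite /cc; case: (leP 0 (x0 n)) => Hc.
    rewrite (ger0_norm Hc) in HPn H1.
    rewrite ger0_norm; clear - HPn H1 Hc; lra.
  rewrite (ltr0_norm Hc) in HPn H1.
  rewrite ler0_norm; clear - HPn H1 Hc; lra.
pose uA := fun n => if a n then u0 n else 0.
pose d := fun n => if a n then u0 n - x0 n else 0.
pose xB := fun n => if a n then 0 else x0 n.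
have HuA : c0 uA by apply: (c0_fin (N := N)) => n Hn; rewrite /uA /a ltnNge Hn.
have Hd : c0 d by apply: (c0_fin (N := N)) => n Hn; rewrite /d /a ltnNge Hn.
have HxB : c0 xB by apply: (c0_dom Hx0) => n; rewrite /xB; case: (a n); rewrite ?normr0.
have Hdec : x0 = fun n => (uA n - d n) + xB n.
  by apply: funext => n; rewrite /uA /d /xB; case: (a n) => /=; [rewrite addr0 opprB addrCA subrr addr0 | rewrite subrr add0r].
have HSx0dec : S x0 = (p - q) - S d + S xB.
  by rewrite {1}Hdec linD // ?linB // ?HSuA //; apply: c0_sub.
have HSd : `|S d| <= k.
  apply: le_trans (HSle _ Hd) _; apply: c0norm_le => n; rewrite /d.
  by case: (a n); [exact: Hdiff | rewrite normr0; exact: ltW].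
have HSxB : `|S xB| <= k by apply: Hstep1' => //; rewrite Hn0.
set c := `|p - q|.
have Hclow : 1 - 3 * k <= c.
  have : `|S x0| <= c + k + k.
    rewrite HSx0dec; apply: le_trans (ler_normD _ _) _.
    apply: lerD => //; apply: le_trans (ler_normD _ _) _; rewrite normrN.
    by apply: lerD.
  move=> H; clear - H HSx0 Het1 Hk0; lra.
have Hmm0 : le 0 (m + m) := pos_add HBL Hm0 Hm0.
have HoneA : c0 (fun k => if a k then (1:R) else 0).
  by apply: (c0_fin (N := N)) => n Hn; rewrite /a ltnNge Hn.
have HpqA : `|p + q| <= 1.
  rewrite -HS1A; apply: le_trans (HSle _ HoneA) _; apply: c0norm_le => n.
  by case: (a n); rewrite ?normr0 ?normr1.
have Hc1 : c <= 1.
  rewrite /c Hcj; apply: le_trans (pos_normle HBL Hj0 _) HpqA.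
  apply/(lleP HBL); rewrite -Hjm.
  by have -> : j + (m + m) - j = m + m by zsolve.
have Hc0 : 0 < c by clear - Hclow Hk1 He1; lra.
have Hnum3 : 1 <= c * (1 + delta (eps / 8)).
  have : (1 - D / 4) * (1 + D) <= c * (1 + delta (eps / 8)).
    apply: ler_pM; clear - Hclow Hk2 HD0 HD1 HDd Hk0; lra.
  move=> H; clear - H HD0 HD1; nra.
have Hmm : `|m + m| <= c * (eps / 8).
  have Hj1 : 0 < `|j| by rewrite -Hcj.
  have Hj2 : `|j + (m + m)| <= `|j| * (1 + delta (eps / 8)).
    by rewrite Hjm -Hcj; apply: le_trans HpqA Hnum3.
  by have := um_scaled HBL Hum He8 Hj0 Hmm0 Hj1 Hj2; rewrite -Hcj.
have Hci : 0 < c^-1 by rewrite invr_gt0.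
have Hcc : c^-1 * c = 1 by rewrite mulVf // gt_eqF.
pose Tx := fun x : nat -> R => c^-1 *: \sum_(0 <= n < N) x n *: v n.
have HTlin : c0_linear Tx.
  move=> al x y _ _; rewrite /Tx.
  have -> : \sum_(0 <= n < N) (al * x n + y n) *: v n =
      al *: \sum_(0 <= n < N) x n *: v n + \sum_(0 <= n < N) y n *: v n.
    by rewrite scaler_sumr -big_split; apply: eq_bigr => n _; rewrite scalerDl scalerA.
  by rewrite scalerDr !scalerA mulrC.
have HTbnd : c0_bounded Tx.
  exists (c^-1 * \sum_(0 <= n < N) `|v n|) => x Hx.
  rewrite /Tx normrZ gtr0_norm // -mulrA; apply: ler_wpM2l; first exact: ltW.
  rewrite mulr_suml; apply: le_trans (ler_norm_sum _ _ _) _; apply: ler_sum => n _.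
  by rewrite normrZ mulrC; apply: ler_wpM2l => //; exact: c0norm_ge.
have Hpm1 (x : nat -> R) (n : nat) : c0 x -> c0norm x <= 1 -> -1 <= x n <= 1.
  by move=> Hx Hxn; rewrite -ler_norml; apply: le_trans (c0norm_ge n Hx) Hxn.
have HTle1 x : c0 x -> c0norm x <= 1 -> `|Tx x| <= 1.
  move=> Hx Hxn; rewrite /Tx normrZ gtr0_norm //.
  have : `|\sum_(0 <= n < N) x n *: v n| <= `|\sum_(0 <= n < N) v n|.
    apply: (normL HBL).
    - rewrite -sumrN; apply: (le_sum HBL) => n; apply/(lleP HBL); rewrite opprK.
      have -> : x n *: v n + v n = (x n + 1) *: v n by rewrite scalerDl scale1r.
      apply: (pos_scale HBL) => //; have H5 := Hpm1 x n Hx Hxn; clear - H5; lra.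
    - apply: (le_sum HBL) => n; apply/(lleP HBL).
      have -> : v n - x n *: v n = (1 - x n) *: v n by rewrite scalerBl scale1r.
      apply: (pos_scale HBL) => //; have H5 := Hpm1 x n Hx Hxn; clear - H5; lra.
  rewrite Hsumv -Hcj -/c => H.
  by rewrite mulrC ler_pdivrMr // mul1r.
have HTu0 : `|Tx u0| = 1 by rewrite /Tx Hsumu normrZ gtr0_norm // -/c mulVf // gt_eqF.
have Hu0c0 : c0 u0.
  by apply: (c0_ev (N := N) Hx0) => n Hn; rewrite /u0 /a ltnNge Hn.
have Hu0n : c0norm u0 = 1.
  apply/eqP; rewrite eq_le; apply/andP; split.
    apply: c0norm_le => n; rewrite /u0; case: (a n); last exact: Hx0le.
    by case: (cc n); rewrite ?normrN normr1.
  case: (pselect (exists n, 1 - k < `|x0 n|)) => [[n0 Hn0']|Hno]; last first.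
    have : c0norm x0 <= 1 - k.
      apply: c0norm_le => n; rewrite leNgt; apply/negP => H; apply: Hno; by exists n.
    move=> H; clear - H Hn0 Hk0; lra.
  have Han0 : a n0.
    rewrite /a; apply/andP; split => //.
    by rewrite ltnNge; apply/negP => HnN; have H5 := HN n0 HnN; clear - H5 Hn0'; lra.
  apply: le_trans (c0norm_ge n0 Hu0c0); rewrite /u0 Han0.
  by case: (cc n0); rewrite ?normrN normr1.
have HTpos : positive_op le Tx.
  move=> x _ Hx; apply: (pos_scale HBL (ltW Hci)); apply: (pos_sum HBL) => n.
  exact: (pos_scale HBL (Hx n) (Hv n)).
have HTop : opnorm Tx = 1.
  apply/eqP; rewrite eq_le; apply/andP; split; first by apply: opnorm_le => x; exact: HTle1.
  by rewrite -{1}HTu0; apply: op_le => //; rewrite Hu0n.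
have Hdist : c0norm (fun n => u0 n - x0 n) < eps.
  apply: le_lt_trans (c0norm_le Hdiff) _; clear - Hk1 He0 He1; lra.
have Hci1 : c^-1 <= 8 / 7.
  by rewrite -div1r ler_pdivrMr //; clear - Hclow Hk1 He1; lra.
have Hci2 : 1 <= c^-1 by rewrite -div1r ler_pdivlMr // mul1r.
have Hopd : opnorm (fun x => Tx x - S x) < eps.
  apply: (le_lt_trans (opnorm_le (b := (c^-1 - 1) + c^-1 * (c * (eps / 8)) + k) _)); last first.
    rewrite mulrA Hcc mul1r.
    have : c^-1 - 1 = c^-1 * (1 - c) by rewrite mulrBr mulr1 Hcc.
    move=> ->; have H5 : c^-1 * (1 - c) <= 8 / 7 * (3 * k).
      apply: ler_pM; clear - Hci Hc1 Hci1 Hclow; lra.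
    clear - H5 Hk1 He1 Hk0; lra.
  move=> x Hx Hxn.
  have HxA : c0 (fun n => if a n then x n else 0).
    by apply: (c0_dom Hx) => n; case: (a n); rewrite ?normr0.
  have HxB' : c0 (fun n => if a n then 0 else x n).
    by apply: (c0_dom Hx) => n; case: (a n); rewrite ?normr0.
  have HSx : S x = S (fun n => if a n then x n else 0) + S (fun n => if a n then 0 else x n).
    rewrite -linD //; congr S; apply: funext => n; by case: (a n); rewrite ?addr0 ?add0r.
  rewrite /Tx Psum HSx.
  set SA := S (fun n => if a n then x n else 0).
  set SB := S (fun n => if a n then 0 else x n).
  have -> : c^-1 *: (SA - Psi x) - (SA + SB) = (c^-1 - 1) *: SA - c^-1 *: Psi x - SB.
    by rewrite scalerBr scalerBl scale1r; zsolve.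
  have HSA : `|SA| <= 1.
    apply: le_trans (HSle _ HxA) _; apply: c0norm_le => n.
    case: (a n); rewrite ?normr0 //; by have := Hpm1 x n Hx Hxn; rewrite -ler_norml.
  have HSBn : `|SB| <= k by apply: Hstep1'.
  have HPsi : `|Psi x| <= `|m + m|.
    rewrite -HPsi1; apply: (normL HBL).
    - rewrite -sumrN; apply: (le_sum HBL) => n; case: (P n); last first.
        by rewrite oppr0; exact: (lle_refl HBL).
      apply/(lleP HBL); rewrite opprK.
      have -> : x n *: wv n + 1 *: wv n = (x n + 1) *: wv n by rewrite scalerDl.
      by apply: (pos_scale HBL); [have H5 := Hpm1 x n Hx Hxn; clear - H5; lra | case: (Hwv n)].
    - apply: (le_sum HBL) => n; case: (P n); last exact: (lle_refl HBL).
      apply/(lleP HBL).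
      have -> : 1 *: wv n - x n *: wv n = (1 - x n) *: wv n by rewrite scalerBl.
      by apply: (pos_scale HBL); [have H5 := Hpm1 x n Hx Hxn; clear - H5; lra | case: (Hwv n)].
  apply: le_trans (ler_normD _ _) _; rewrite normrN.
  apply: lerD => //; apply: le_trans (ler_normD _ _) _; rewrite normrN !normrZ.
  rewrite (ger0_norm (ltW Hci)) ger0_norm; last by clear - Hci2; lra.
  apply: lerD.
    by rewrite -[X in _ <= X]mulr1; apply: ler_wpM2l => //; clear - Hci2; lra.
  by apply: ler_wpM2l; [exact: ltW | exact: le_trans HPsi Hmm].
exists u0, Tx; split => //.
Qed.

Unset Implicit Arguments.

Theorem corollary3p3 (R : realType) :
  (forall (Y : completeNormedModType R) (le : Y -> Y -> Prop),
     is_banach_lattice le -> uniformly_monotone le -> BPBp_pos le) /\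
  (forall delta : R -> R, exists eta : R -> R,
     forall (Y : completeNormedModType R) (le : Y -> Y -> Prop),
       is_banach_lattice le -> um_modulus le delta -> BPBp_pos_with le eta).
Proof.
split; last first.
  by move=> delta; exists (eta_of delta) => Y le HBL Hum; exact: main_thm.
move=> Y le HBL HU.
have Hex : forall e : R, exists d : R, 0 < e -> 0 < d /\
    (forall x y : Y, `|x| = 1 -> le 0 x -> le 0 y -> `|x + y| <= 1 + d -> `|y| <= e).
  move=> e; case: (pselect (0 < e)) => He.
    by have [d Hd1 Hd2] := HU e He; exists d.
  by exists 0.
have [f Hf] := choice Hex.
exists (eta_of f); apply: main_thm; first exact: HBL.
by move=> e He; apply: Hf.
Qed.
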